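(* Let $P(t)=\binom{r+t}{r}-\binom{r+t-d}{r}$ and let $x\in\mathrm{Hilb}^P(\mathbb{P}^r_k)^{us}_d$. Suppose $g\in G$ satisfies $|\Delta_{g.x,d}|=\max_{h\in G}|\Delta_{h.x,d}|$ and $\lambda_{g.x,d}=(a_0,\dots,a_r)$ with $a_0\le a_1\le\cdots\le a_r$. Then for every lower-triangular matrix $l\in H=\mathrm{SL}_{r+1}(k)$ one has $\lambda_{lg.x,d}=\lambda_{g.x,d}$, and $\lambda_{g.x,d}\in\Lambda_{g.x,d}$.
   Context: Let $k$ be an algebraically closed field, $r\ge1$, $d\ge1$, $S=k[x_0,\dots,x_r]$, $S_t$ its degree-$t$ part, $M_t$ the set of degree-$t$ monomials. With $P(t)=\binom{r+t}{r}-\binom{r+t-d}{r}$, a closed point $x$ of $\mathrm{Hilb}^P(\mathbb{P}^r_k)$ is a hypersurface $V(f)$, $0\ne f\in S_d$ (up to scalar), and its $d$-th Hilbert point is $\phi_d(x)=[f]\in\mathbb{P}(S_d)$. $G=\mathrm{GL}_{r+1}(k)$ acts on $S_1=\mathrm{span}(x_0,\dots,x_r)$ by the standard representation, hence on $S$, and $g.x$ is the point of $V(g.f)$. $T_0$ is the diagonal torus of $G$, $T=T_0\cap H$; $\lambda=(a_0,\dots,a_r)\in\mathbb{Z}^{r+1}$ denotes $s\mapsto\mathrm{diag}(s^{a_0},\dots,s^{a_r})$, which multiplies $x_0^{e_0}\cdots x_r^{e_r}$ by $s^{\sum a_ie_i}$; $\Gamma(T)$ = those with $\sum a_i=0$.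 $\Vert\cdot\Vert$ is a conjugation-invariant norm on one-parameter subgroups of $G$ restricting to the Euclidean norm on $\Gamma(T_0)$. For a representation $V$, $0\ne v$, $\lambda\in\Gamma(G)$: $\mu(v,\lambda)$ is the smallest $i$ such that the $s^i$-weight component of $v$ under $\lambda$ is nonzero. $\Lambda_{x,d}$ is the set of indivisible $\lambda\in\Gamma(H)$ maximizing $\mu(\phi_d(x),\lambda)/\Vert\lambda\Vert$; $x$ is unstable ($x\in\mathrm{Hilb}^P(\mathbb{P}^r_k)^{us}_d$) if this maximum is positive. The state $\Xi_{x,d}$ is the set of monomials occurring in $f$ with nonzero coefficient, identified with exponent vectors in $\mathbb{R}^{r+1}$; $|\Delta_{x,d}|=\max_{0\ne\lambda\in\Gamma(T)}\min_{m\in\Xi_{x,d}}\langle\lambda,m\rangle/\Vert\lambda\Vert$ (standard inner product), which equals the distance from $\frac{d}{r+1}(1,\dots,1)$ to the convex hull $\Delta_{x,d}$ of $\Xi_{x,d}$. When $|\Delta_{x,d}|>0$, $\lambda_{x,d}$ denotes the unique indivisible element of $\Gamma(T)$ attaining this maximum (equivalently, the indivisible element of $\Gamma(T)$ that is a positive real multiple of $h_{x,d}-\frac{d}{r+1}(1,\dots,1)$, where $h_{x,d}$ is the point of $\Delta_{x,d}$ nearest to $\frac{d}{r+1}(1,\dots,1)$). *)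

(* Defs.v *)
From Stdlib Require Import ZArith Reals ClassicalEpsilon.
From HB Require Import structures.
From mathcomp Require Import all_boot all_order all_algebra.
Set Implicit Arguments. Unset Strict Implicit. Unset Printing Implicit Defensive.
Import GRing.Theory.

(* A polynomial is a formal finite sum of terms c * x^m, stored as a   *)
(* list of (coefficient, exponent vector); its coefficient at m is the *)
(* sum of the coefficients of the terms with monomial m.               *)
Section Poly.
Local Open Scope ring_scope.
Variable k : fieldType.
Variable n : nat.

Definition mono := {ffun 'I_n -> nat}.
Definition fpoly := seq (k * mono)%type.

Definition mdeg (m : mono) : nat := (\sum_(i < n) m i)%N.
Definition madd (m1 m2 : mono) : mono := [ffun i => (m1 i + m2 i)%N].
Definition mzero : mono := [ffun _ => 0%N].
Definition munit (i : 'I_n) : mono := [ffun j => nat_of_bool (j == i)].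

Definition pcoef (p : fpoly) (m : mono) : k := \sum_(t <- p | t.2 == m) t.1.
Definition pmul (p q : fpoly) : fpoly :=
  [seq (t.1 * u.1, madd t.2 u.2) | t <- p, u <- q].
Definition pone : fpoly := [:: (1, mzero)].
Definition pexp (p : fpoly) (e : nat) : fpoly := iter e (pmul p) pone.
Definition pscale (c : k) (p : fpoly) : fpoly := [seq (c * t.1, t.2) | t <- p].

Definition homog (d : nat) (p : fpoly) : Prop := all (fun t => mdeg t.2 == d) p.
Definition pnonzero (p : fpoly) : Prop := exists m, pcoef p m != 0.
Definition support (p : fpoly) : seq mono :=
  undup [seq t.2 | t <- p & pcoef p t.2 != 0].

(* GL_n acts on S_1 by the standard representation: g.x_j = sum_i g_ij x_i,
   extended to S as a k-algebra automorphism. *)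
Definition lin_form (g : 'M[k]_n) (j : 'I_n) : fpoly :=
  [seq (g i j, munit i) | i <- enum 'I_n].
Definition act_mono (g : 'M[k]_n) (m : mono) : fpoly :=
  foldr (fun j acc => pmul (pexp (lin_form g j) (m j)) acc) pone (enum 'I_n).
Definition act (g : 'M[k]_n) (p : fpoly) : fpoly :=
  flatten [seq pscale t.1 (act_mono g t.2) | t <- p].
End Poly.

Section Stab.
Variable k : fieldType.
Variable n : nat.

Definition zvec := 'I_n -> Z.
Definition zsum (a : zvec) : Z := \big[Z.add/Z0]_(i < n) a i.
Definition znontriv (a : zvec) : Prop := exists i, a i <> Z0.
Definition indivisible (a : zvec) : Prop :=
  znontriv a /\
  forall (c : Z) (b : zvec), (forall i, a i = Z.mul c (b i)) -> c = Zpos xH \/ c = Zneg xH.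

Definition znorm (a : zvec) : R :=
  sqrt (\big[Rplus/R0]_(i < n) Rsqr (IZR (a i))).

(* weight <a, m> of the monomial x^m under the diagonal 1-PS a *)
Definition wt (a : zvec) (m : mono n) : Z :=
  \big[Z.add/Z0]_(i < n) Z.mul (a i) (Z.of_nat (m i)).

(* mu(v, lambda_a) for diagonal lambda_a: the smallest weight i whose
   s^i weight component is nonzero, i.e. min of <a,m> over the state *)
Definition mu_diag (a : zvec) (p : fpoly k n) : Z :=
  match support p with
  | [::] => Z0
  | m :: s => foldr (fun m' acc => Z.min (wt a m') acc) (wt a m) s
  end.

(* A one-parameter subgroup of H = SL_n is  s |-> h diag(s^a) h^{-1}
   with h in GL_n and sum a = 0. *)
Definition Gamma_H (h : 'M[k]_n) (a : zvec) : Prop :=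
  h \in unitmx /\ zsum a = Z0.

(* mu(v, h lambda_a h^{-1}): the s^i-weight components of v under
   h lambda_a h^{-1} are h.(components of h^{-1}.v under lambda_a) *)
Definition mu_gen (p : fpoly k n) (h : 'M[k]_n) (a : zvec) : Z :=
  mu_diag a (act (invmx h) p).

(* conjugation-invariant norm: ||h lambda_a h^-1|| = ||a|| *)
Definition ratio (p : fpoly k n) (h : 'M[k]_n) (a : zvec) : R :=
  Rdiv (IZR (mu_gen p h a)) (znorm a).

Definition unstable (p : fpoly k n) : Prop :=
  exists h a, Gamma_H h a /\ znontriv a /\ Rlt R0 (ratio p h a).

Definition inLambda (p : fpoly k n) (h : 'M[k]_n) (a : zvec) : Prop :=
  Gamma_H h a /\ indivisible a /\
  forall h' a', Gamma_H h' a' -> znontriv a' -> Rle (ratio p h' a') (ratio p h a).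

Definition inGammaT (a : zvec) : Prop := zsum a = Z0 /\ znontriv a.

Definition DeltaQ (p : fpoly k n) (a : zvec) : R :=
  Rdiv (IZR (mu_diag a p)) (znorm a).

Definition DeltaAbs (p : fpoly k n) : R :=
  epsilon (inhabits R0)
    (fun M => (exists a, inGammaT a /\ DeltaQ p a = M) /\
              forall a, inGammaT a -> Rle (DeltaQ p a) M).

Definition is_lambda (p : fpoly k n) (a : zvec) : Prop :=
  Rlt R0 (DeltaAbs p) /\ inGammaT a /\ indivisible a /\ DeltaQ p a = DeltaAbs p.
End Stab.

(* Main.v *)
Require Import Defs.
From Stdlib Require Import ZArith Reals ClassicalEpsilon Lia.
From Stdlib Require Lra.
From HB Require Import structures.
From mathcomp Require Import all_boot all_order all_algebra.
From mathcomp Require Import ring lra ssrZ.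
From mathcomp Require mpoly.
Set Implicit Arguments. Unset Strict Implicit. Unset Printing Implicit Defensive.
Import Order.TTheory GRing.Theory Num.Theory.

Module Gm.
Import Defs.
Local Open Scope ring_scope.

Section Geo.
Variable F : realFieldType.
Variable V : lmodType F.
Variable dot : V -> V -> F.
Hypothesis dotDl : forall x y z, dot (x + y) z = dot x z + dot y z.
Hypothesis dotZl : forall (t : F) x z, dot (t *: x) z = t * dot x z.
Hypothesis dotC : forall x y, dot x y = dot y x.
Hypothesis dot_ge0 : forall x, 0 <= dot x x.

Lemma dot0l z : dot 0 z = 0.
Proof. by have := dotZl 0 0 z; rewrite scale0r mul0r. Qed.
Lemma dotNl x z : dot (- x) z = - dot x z.
Proof. by rewrite -scaleN1r dotZl mulN1r. Qed.
Lemma dotBl x y z : dot (x - y) z = dot x z - dot y z.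
Proof. by rewrite dotDl dotNl. Qed.
Lemma dotDr x y z : dot z (x + y) = dot z x + dot z y.
Proof. by rewrite dotC dotDl !(dotC z). Qed.
Lemma dotZr (t : F) x z : dot z (t *: x) = t * dot z x.
Proof. by rewrite dotC dotZl dotC. Qed.
Lemma dot0r z : dot z 0 = 0.
Proof. by rewrite dotC dot0l. Qed.
Lemma dotBr x y z : dot z (x - y) = dot z x - dot z y.
Proof. by rewrite dotC dotBl !(dotC z). Qed.
Lemma dot_suml (I : Type) (r : seq I) (P : pred I) (G : I -> V) z :
  dot (\sum_(i <- r | P i) G i) z = \sum_(i <- r | P i) dot (G i) z.
Proof. by apply: (big_morph (fun x => dot x z)) => [x y|]; [exact: dotDl|exact: dot0l]. Qed.
Lemma dot_sumr (I : Type) (r : seq I) (P : pred I) (G : I -> V) z :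
  dot z (\sum_(i <- r | P i) G i) = \sum_(i <- r | P i) dot z (G i).
Proof. by rewrite dotC dot_suml; apply: eq_bigr => i _; rewrite dotC. Qed.

Lemma dot_null e x : dot e e = 0 -> dot x e = 0.
Proof.
move=> he; apply/eqP; apply/negPn/negP => hne.
pose t := - (dot x x + 1) / (2 * dot x e).
have := dot_ge0 (x + t *: e).
rewrite !dotDl !dotDr !dotZl !dotZr he (dotC e x) mulr0.
have -> : t * dot x e = - (dot x x + 1) / 2.
  by rewrite /t; field.
rewrite mulr0; have := dot_ge0 x; lra.
Qed.

Lemma cauchy_schwarz a h : dot a h ^+ 2 <= dot a a * dot h h.
Proof.
have [ha|ha] := eqVneq (dot a a) 0.
  by rewrite dotC (dot_null h ha) expr0n /= ha mul0r.
have hpos : 0 < dot a a by rewrite lt_def ha dot_ge0.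
pose t := dot a h / dot a a.
have := dot_ge0 (h - t *: a).
rewrite !dotBl !dotBr !dotZl !dotZr (dotC h a).
have e1 : t * dot a h = dot a h ^+ 2 / dot a a by rewrite /t; field.
have e2 : t * (t * dot a a) = dot a h ^+ 2 / dot a a.
  by rewrite /t; field.
rewrite e1 e2 => H.
have H2 : dot a h ^+ 2 / dot a a <= dot h h by lra.
have H3 : dot a a * (dot a h ^+ 2 / dot a a) = dot a h ^+ 2 by field.
by rewrite -H3; apply: ler_wpM2l => //; exact: ltW.
Qed.

Lemma gs (I : eqType) (u : I -> V) (s : seq I) (y : V) : uniq s ->
  exists c : I -> F, forall i, i \in s -> dot (y - \sum_(j <- s) c j *: u j) (u i) = 0.
Proof.
elim: s y => [|x s IH] y /=.
  by move=> _; exists (fun _ => 0) => i.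
case/andP=> xs us.
have [c1 h1] := IH y us.
have [c2 h2] := IH (u x) us.
pose y1 := y - \sum_(j <- s) c1 j *: u j.
pose e := u x - \sum_(j <- s) c2 j *: u j.
have orth_span w (c : I -> F) : (forall i, i \in s -> dot w (u i) = 0) ->
    dot w (\sum_(j <- s) c j *: u j) = 0.
  move=> hw; rewrite dot_sumr big1_seq // => j /andP[_ js].
  by rewrite dotZr hw // mulr0.
have h2' : forall i, i \in s -> dot e (u i) = 0 := h2.
have h1' : forall i, i \in s -> dot y1 (u i) = 0 := h1.
have ux : u x = e + \sum_(j <- s) c2 j *: u j by rewrite /e subrK.
have [he|he] := eqVneq (dot e e) 0.
  exists (fun j => if j == x then 0 else c1 j) => i.
  have -> : \sum_(j <- x :: s) (if j == x then 0 else c1 j) *: u j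
          = \sum_(j <- s) c1 j *: u j.
    rewrite big_cons eqxx scale0r add0r; apply: eq_big_seq => j js.
    by case: eqP => // ejx; rewrite -ejx js in xs.
  rewrite inE => /orP[/eqP ->|iin]; last exact: h1.
  rewrite ux dotDr (dot_null _ he) add0r; apply: orth_span => j js; exact: h1.
pose t := dot y1 e / dot e e.
exists (fun j => if j == x then t else c1 j - t * c2 j).
have Hsum : \sum_(j <- x :: s) (if j == x then t else c1 j - t * c2 j) *: u j
    = \sum_(j <- s) c1 j *: u j + t *: e.
  rewrite big_cons eqxx.
  rewrite (eq_big_seq (fun j => c1 j *: u j - t *: (c2 j *: u j))); last first.
    move=> j js; case: eqP => [ejx|_]; first by rewrite -ejx js in xs.
    by rewrite scalerBl scalerA.
  rewrite big_split /= scalerBr scaler_sumr sumrN.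
  by rewrite addrCA addrA.
rewrite Hsum => i; rewrite inE => /orP[/eqP ->|iin].
  rewrite opprD addrA ux dotDr (orth_span _ c2); last first.
    by move=> j js; rewrite dotBl dotZl h1 // h2' // mulr0 subr0.
  rewrite addr0 dotBl dotZl -/y1 /t -mulrA mulVf // mulr1 subrr //.
by rewrite opprD addrA dotBl dotZl h1 // h2' // mulr0 subr0.
Qed.

Variable I : finType.
Variable P : I -> V.

Definition comb (A : {set I}) (c : I -> F) := \sum_(i in A) c i *: P i.
Definition inconv (A : {set I}) y := exists c : I -> F,
  (forall i, i \in A -> 0 <= c i) /\ \sum_(i in A) c i = 1 /\ y = comb A c.
Definition good (A : {set I}) p :=
  inconv A p /\ forall i j, i \in A -> j \in A -> dot p (P i) = dot p (P j).

Lemma dot_comb (A : {set I}) (c : I -> F) p K : (forall i, i \in A -> dot p (P i) = K) ->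
  \sum_(i in A) c i = 1 -> dot p (comb A c) = K.
Proof.
move=> hK hc; rewrite /comb dot_sumr (eq_bigr (fun i => c i * K)).
  by rewrite -mulr_suml hc mul1r.
by move=> i iA; rewrite dotZr hK.
Qed.

Lemma MN (A : {set I}) i0 : i0 \in A -> exists mu : I -> F,
  \sum_(i in A) mu i = 1 /\
  forall i, i \in A -> dot (comb A mu) (P i) = dot (comb A mu) (P i0).
Proof.
move=> i0A.
have [c hc] := gs (fun i => P i - P i0) (P i0) (enum_uniq (mem A)).
rewrite big_enum in hc.
pose S := \sum_(i in A) c i.
exists (fun i => (if i == i0 then 1 + S else 0) - c i).
have hcomb : comb A (fun i => (if i == i0 then 1 + S else 0) - c i) =
    P i0 - \sum_(j in A) c j *: (P j - P i0).
  rewrite /comb (eq_bigr (fun i => (if i == i0 then 1 + S else 0) *: P i - c i *: P i));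
    last by move=> i _; rewrite scalerBl.
  rewrite sumrB (big_setD1 i0 i0A) eqxx big1 ?addr0; last first.
    by move=> i; rewrite !inE => /andP[/negbTE -> _]; rewrite scale0r.
  rewrite [in RHS](eq_bigr (fun j => c j *: P j - c j *: P i0)); last by move=> j _; rewrite /= scalerBr.
  rewrite sumrB -scaler_suml -/S scalerDl scale1r.
  by rewrite /= addr0 opprB addrA.
split.
  rewrite sumrB (big_setD1 i0 i0A) eqxx big1 ?addr0; last first.
    by move=> i; rewrite !inE => /andP[/negbTE ->].
  by rewrite /= addr0 -/S addrK.
move=> i iA; rewrite hcomb; apply/eqP; rewrite -subr_eq0 -dotBr; apply/eqP.
by apply: hc; rewrite mem_enum.
Qed.

Lemma finmin (T : eqType) (Q : T -> Prop) (f : T -> F) (s : seq T) j :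
  j \in s -> Q j -> exists i, [/\ i \in s, Q i & forall k, k \in s -> Q k -> f i <= f k].
Proof.
elim: s j => [//|x s IH] j /=; rewrite inE => /orP[/eqP ->|js] Qj.
  have [Qs|nQs] := classic (exists k, k \in s /\ Q k).
    case: Qs => k [ks Qk]; have [i [is' Qi hi]] := IH k ks Qk.
    have [fxi|fix'] := lerP (f x) (f i).
      exists x; split; rewrite ?inE ?eqxx // => k'; rewrite inE => /orP[/eqP ->//|k's] Qk'.
      exact: le_trans fxi (hi _ k's Qk').
    exists i; split; rewrite ?inE ?is' ?orbT // => k'; rewrite inE => /orP[/eqP ->|k's] Qk'.
      exact: ltW. exact: hi.
  exists x; split; rewrite ?inE ?eqxx // => k'; rewrite inE => /orP[/eqP ->//|k's] Qk'.
  by case: nQs; exists k'.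
have [i [is' Qi hi]] := IH j js Qj.
have [Qx|nQx] := classic (Q x).
  have [fxi|fix'] := lerP (f x) (f i).
    exists x; split; rewrite ?inE ?eqxx // => k'; rewrite inE => /orP[/eqP ->//|k's] Qk'.
    exact: le_trans fxi (hi _ k's Qk').
  exists i; split; rewrite ?inE ?is' ?orbT // => k'; rewrite inE => /orP[/eqP ->|k's] Qk'.
    exact: ltW. exact: hi.
exists i; split; rewrite ?inE ?is' ?orbT // => k'; rewrite inE => /orP[/eqP ->|k's] Qk'.
  by case: nQx. exact: hi.
Qed.

Lemma dot_pp_le (A : {set I}) mu c i0 : i0 \in A ->
  \sum_(i in A) mu i = 1 -> \sum_(i in A) c i = 1 ->
  (forall i, i \in A -> dot (comb A mu) (P i) = dot (comb A mu) (P i0)) ->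
  dot (comb A mu) (comb A c) = dot (comb A mu) (comb A mu) /\
  dot (comb A mu) (comb A mu) <= dot (comb A c) (comb A c).
Proof.
move=> i0A hmu hc hK.
have e1 := dot_comb hK hc; have e2 := dot_comb hK hmu.
have e3 : dot (comb A mu) (comb A c) = dot (comb A mu) (comb A mu) by rewrite e1 e2.
split=> //.
have := dot_ge0 (comb A c - comb A mu).
rewrite !dotBl !dotBr (dotC (comb A c) (comb A mu)) e3; lra.
Qed.

Lemma reduce n : forall (A : {set I}) y, (#|A| <= n)%N -> inconv A y ->
  exists (B : {set I}) p, [/\ B \subset A, good B p & dot p p <= dot y y].
Proof.
elim: n => [|n IH] A y hA [c [c0 [c1 ->]]].
  move: hA; rewrite leqn0 cards_eq0 => /eqP A0.
  by move: c1; rewrite A0 big_set0 => /eqP; rewrite eq_sym oner_eq0.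
have [i0 i0A] : exists i0, i0 \in A.
  apply/set0Pn; apply/negP => /eqP A0.
  by move: c1; rewrite A0 big_set0 => /eqP; rewrite eq_sym oner_eq0.
have [mu [hmu hK]] := MN i0A.
have [e3 hle] := dot_pp_le i0A hmu c1 hK.
have [/existsP [j /andP [jA mj]] | hno] := boolP [exists j in A, mu j < 0]; last first.
  exists A, (comb A mu); split=> //; split.
    exists mu; split=> // i iA; rewrite leNgt; apply/negP => hi.
    by move/existsP: hno; apply; exists i; rewrite iA.
  by move=> i k iA kA; rewrite !hK.
have jenum : j \in enum I by rewrite mem_enum.
have Qj : (fun i => is_true ((i \in A) && (mu i < 0))) j by rewrite /= jA mj.
have [is' [_ /andP [isA mis] hmin]] := finmin (Q := fun i => is_true ((i \in A) && (mu i < 0))) (fun i => c i / (c i - mu i)) jenum Qj.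
set i' := is' in isA mis hmin.
pose t := c i' / (c i' - mu i').
have ci0 := c0 _ isA.
have den : 0 < c i' - mu i' by lra.
have t0 : 0 <= t by rewrite /t divr_ge0 // ltW.
have t1 : t < 1 by rewrite /t ltr_pdivrMr // mul1r; lra.
pose nu i := (1 - t) * c i + t * mu i.
have nu0 : forall i, i \in A -> 0 <= nu i.
  move=> i iA; have ci := c0 _ iA.
  have [mi|mi] := lerP 0 (mu i).
    by rewrite /nu addr_ge0 // mulr_ge0 //; lra.
  have hti : t <= c i / (c i - mu i).
    by apply: hmin; rewrite ?mem_enum //= iA mi.
  have dI : 0 < c i - mu i by lra.
  have : t * (c i - mu i) <= c i.
    by rewrite -(ler_pdivlMr _ _ dI).
  rewrite /nu; lra.
have nui : nu i' = 0 by rewrite /nu /t; field; lra.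
have hnu : \sum_(i in A) nu i = 1.
  rewrite /nu big_split /= -!mulr_sumr c1 hmu; lra.
have hz : comb A nu = (1 - t) *: comb A c + t *: comb A mu.
  rewrite /comb !scaler_sumr -big_split /=; apply: eq_bigr => i _.
  by rewrite /nu /= !scalerA scalerDl.
have hcA : (#|A :\ i'| <= n)%N.
  by move: hA; rewrite (cardsD1 i' A) isA add1n ltnS.
have hzconv : inconv (A :\ i') (comb A nu).
  exists nu; split; [|split].
  - by move=> i; rewrite !inE => /andP [_ iA]; exact: nu0.
  - by move: hnu; rewrite (big_setD1 i' isA) /= nui add0r.
  - by rewrite /comb (big_setD1 i' isA) /= nui scale0r add0r.
have [B [p [hB hgood hp]]] := IH _ _ hcA hzconv.
exists B, p; split=> //.
  by apply: subset_trans hB _; apply: subsetDl.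
apply: le_trans hp _.
rewrite hz !dotDl !dotDr !dotZl !dotZr (dotC (comb A c) (comb A mu)) e3.
set Y := dot (comb A c) (comb A c) in hle *; set Pp := dot (comb A mu) (comb A mu) in hle e3 *.
have h1t : 0 <= 1 - t by lra.
have h2t : 0 <= 2 - t by lra.
have hYP : 0 <= Y - Pp by lra.
have := mulr_ge0 (mulr_ge0 t0 h2t) hYP.
nra.
Qed.

Lemma good_dot (B : {set I}) p y : good B p -> inconv B y -> dot p y = dot p p.
Proof.
move=> [[mu [_ [hmu ->]]] hK] [c [_ [hc ->]]].
have [i0 i0B] : exists i0, i0 \in B.
  apply/set0Pn; apply/negP => /eqP B0.
  by move: hc; rewrite B0 big_set0 => /eqP; rewrite eq_sym oner_eq0.
have hK' : forall i, i \in B -> dot (comb B mu) (P i) = dot (comb B mu) (P i0).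
  by move=> i iB; apply: hK.
by rewrite (dot_comb hK' hc) (dot_comb hK' hmu).
Qed.

Lemma good_val (B : {set I}) p p' : good B p -> good B p' -> dot p p = dot p' p'.
Proof.
move=> g g'; rewrite -(good_dot g g'.1) -(good_dot g' g.1); exact: dotC.
Qed.

Lemma inconvT (B : {set I}) y : inconv B y -> inconv setT y.
Proof.
move=> [c [c0 [c1 ->]]]; exists (fun i => if i \in B then c i else 0); split; [|split].
- by move=> i _; case: ifP => // iB; exact: c0.
- by rewrite -c1 [RHS]big_mkcond /=; apply: eq_bigl => i; rewrite inE.
- rewrite /comb [LHS]big_mkcond /=; apply: eq_big => [i|i _]; first by rewrite inE.
  by case: ifP => _; rewrite ?scale0r.
Qed.

Lemma nearest (i1 : I) : exists h : V, inconv setT h /\ forall i, dot h h <= dot h (P i).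
Proof.
pose pB (B : {set I}) := epsilon (inhabits (0 : V)) (fun p => good B p).
have hQ1 : good [set i1] (pB [set i1]).
  apply: (epsilon_spec (inhabits (0 : V)) (fun p => good [set i1] p)).
  exists (P i1); split.
    exists (fun _ => 1); split; [by []|split]; first by rewrite big_set1.
    by rewrite /comb big_set1 scale1r.
  by move=> i j; rewrite !inE => /eqP -> /eqP ->.
have hen : [set i1] \in enum {set I} by rewrite mem_enum.
have [Bs [_ gBs hmin]] := finmin (Q := fun B => good B (pB B))
   (fun B => dot (pB B) (pB B)) hen hQ1.
set ps := pB Bs in gBs hmin.
have hps : forall y, inconv setT y -> dot ps ps <= dot y y.
  move=> y hy; have [B [p [_ gp hp]]] := reduce (leqnn _) hy.
  have gB : good B (pB B).
    by apply: (epsilon_spec (inhabits (0 : V)) (fun p => good B p)); exists p.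
  apply: le_trans hp; rewrite (good_val gp gB); apply: hmin => //; exact: mem_enum.
have [lam [lam0 [lam1 hlam]]] := inconvT gBs.1.
exists ps; split; first by exists lam.
move=> i; rewrite leNgt; apply/negP => hlt.
set v := P i in hlt *.
set c := dot ps v - dot ps ps.
have hc : c < 0 by rewrite /c; lra.
set D := dot (v - ps) (v - ps).
have hD : 0 <= D by exact: dot_ge0.
pose t := - c / (D - c).
have hDc : 0 < D - c by lra.
have t0 : 0 < t by rewrite /t divr_gt0 // oppr_gt0.
have t1 : t <= 1 by rewrite /t ler_pdivrMr // mul1r; lra.
have hy : inconv setT ((1 - t) *: ps + t *: v).
  exists (fun j => (1 - t) * lam j + t * (j == i)%:R); split; [|split].
  - move=> j _; apply: addr_ge0; apply: mulr_ge0; rewrite ?lam0 //; lra.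
  - rewrite big_split /= -!mulr_sumr lam1 (big_setD1 i) ?inE //= eqxx big1 ?addr0.
      by rewrite mulr1 mulr1 subrK.
    by move=> j; rewrite !inE => /andP [/negbTE ->].
  - rewrite /comb (eq_bigr (fun j => (1 - t) *: (lam j *: P j) + t *: ((j == i)%:R *: P j))); last first.
      by move=> j _; rewrite !scalerA scalerDl.
    rewrite big_split /= -!scaler_sumr -/(comb setT lam) -hlam (big_setD1 i) ?inE //= eqxx big1.
      by rewrite scale1r addr0.
    by move=> j; rewrite !inE => /andP [/negbTE ->]; rewrite scale0r.
have := hps _ hy.
rewrite !dotDl !dotDr !dotZl !dotZr (dotC v ps).
have eD : D = dot v v - 2 * dot ps v + dot ps ps.
  by rewrite /D !dotBl !dotBr (dotC v ps); lra.
have e : (2 * c + t * D) * (D - c) = c * (D - 2 * c).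
  by rewrite /t; field; rewrite gt_eqF.
have neg : c * (D - 2 * c) < 0 by nra.
have key : 2 * c + t * D < 0 by nra.
have k2 : t * (2 * c + t * D) < 0 by rewrite pmulr_rlt0.
move: k2; rewrite eD /c; nra.
Qed.

End Geo.

End Gm.
Import Gm.

Module Cm.
Import Defs.
Local Open Scope ring_scope.

Definition zq (z : Z) : rat := (int_of_Z z)%:~R.

Lemma zqD x y : zq (Z.add x y) = zq x + zq y.
Proof. by rewrite /zq -rmorphD /= -(rmorphD int_of_Z). Qed.
Lemma zqM x y : zq (Z.mul x y) = zq x * zq y.
Proof. by rewrite /zq -rmorphM /= -(rmorphM int_of_Z). Qed.
Lemma zq0 : zq Z0 = 0. Proof. by []. Qed.
Lemma zq_nat k : zq (Z.of_nat k) = k%:R.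
Proof. by rewrite /zq (_ : Z.of_nat k = Z_of_int (Posz k)) // Z_of_intK. Qed.
Lemma zq_int z : zq (Z_of_int z) = z%:~R.
Proof. by rewrite /zq Z_of_intK. Qed.
Lemma int_of_Z_ge0 z : (0 <= int_of_Z z)%R = Z.leb 0 z.
Proof. by case: z. Qed.
Lemma zq_le x y : (zq x <= zq y) = Z.leb x y.
Proof.
rewrite /zq ler_int -subr_ge0 -(rmorphB int_of_Z) int_of_Z_ge0.
apply/idP/idP; move/Z.leb_le => H; apply/Z.leb_le; rewrite /GRing.add /GRing.opp /= in H *; lia.
Qed.
Lemma zq_inj x y : zq x = zq y -> x = y.
Proof.
move=> h; have h1 : Z.leb x y by rewrite -zq_le h.
have h2 : Z.leb y x by rewrite -zq_le h.
move/Z.leb_le: h1; move/Z.leb_le: h2; lia.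
Qed.
Lemma zq_sum (I : Type) (r : seq I) (P : pred I) (G : I -> Z) :
  zq (\big[Z.add/Z0]_(i <- r | P i) G i) = \sum_(i <- r | P i) zq (G i).
Proof. by apply: (big_morph zq zqD zq0). Qed.

Definition rdot n (u v : 'rV[rat]_n) : rat := \sum_j u 0 j * v 0 j.
Lemma rdotDl n (x y z : 'rV[rat]_n) : rdot (x + y) z = rdot x z + rdot y z.
Proof. by rewrite /rdot -big_split; apply: eq_bigr => j _; rewrite !mxE mulrDl. Qed.
Lemma rdotZl n (t : rat) (x z : 'rV[rat]_n) : rdot (t *: x) z = t * rdot x z.
Proof. by rewrite /rdot mulr_sumr; apply: eq_bigr => j _; rewrite !mxE mulrA. Qed.
Lemma rdotC n (x y : 'rV[rat]_n) : rdot x y = rdot y x.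
Proof. by rewrite /rdot; apply: eq_bigr => j _; rewrite mulrC. Qed.
Lemma rdot_ge0 n (x : 'rV[rat]_n) : 0 <= rdot x x.
Proof. by rewrite /rdot; apply: sumr_ge0 => j _; rewrite -expr2 sqr_ge0. Qed.
Lemma rdot_gt0 n (x : 'rV[rat]_n) j : x 0 j != 0 -> 0 < rdot x x.
Proof.
move=> hj; rewrite /rdot (bigD1 j) //=; apply: ltr_pwDl.
  by rewrite -expr2 exprn_even_gt0 // hj orbT.
by apply: sumr_ge0 => i _; rewrite -expr2 sqr_ge0.
Qed.

Lemma foldr_min (T : eqType) (w : T -> Z) x s :
  let f := foldr (fun m' acc => Z.min (w m') acc) (w x) s in
  Z.le f (w x) /\ (forall y, y \in s -> Z.le f (w y)) /\
  (f = w x \/ exists y, y \in s /\ f = w y).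
Proof.
elim: s => [|y s [IH1 [IH2 IH3]]] /=; first by split; [lia|split=> //; left].
split; first lia.
split; first by move=> z; rewrite inE => /orP[/eqP ->|zs]; [lia|have := IH2 _ zs; lia].
have [e|e] := Z.min_spec (w y) (foldr (fun m' acc => Z.min (w m') acc) (w x) s).
  by right; exists y; split; [rewrite inE eqxx|lia].
case: IH3 => [e3|[z [zs e3]]]; first by left; lia.
by right; exists z; split; [rewrite inE zs orbT|lia].
Qed.

Section MuS.
Variables (k : fieldType) (n : nat).
Implicit Types (p : fpoly k n) (a : zvec n) (m : mono n).

Lemma mem_support p m : (m \in support p) = (pcoef p m != 0).
Proof.
rewrite /support mem_undup; apply/mapP/idP.
  by case=> t; rewrite mem_filter => /andP [h _] ->.
move=> h; have [t tp /eqP tm] : exists2 t, t \in p & t.2 == m.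
  apply/hasP; move: h; apply: contraLR; rewrite negbK => hn.
  rewrite /pcoef big1_seq // => t /andP [tm tp].
  by case/hasP: hn; exists t.
by exists t => //; rewrite mem_filter tp andbT tm.
Qed.

Lemma mu_le a p m : m \in support p -> Z.le (mu_diag a p) (wt a m).
Proof.
rewrite /mu_diag; case: (support p) => [//|x s].
have [h1 [h2 _]] := foldr_min (wt a) x s.
by rewrite inE => /orP [/eqP ->|ms]; [exact: h1|exact: h2].
Qed.

Lemma mu_attained a p : support p != [::] ->
  exists2 m, m \in support p & mu_diag a p = wt a m.
Proof.
rewrite /mu_diag; case: (support p) => [//|x s] _.
have [_ [_ [h3|[y [ys h3]]]]] := foldr_min (wt a) x s.
  by exists x; rewrite ?inE ?eqxx.
by exists y; rewrite ?inE ?ys ?orbT.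
Qed.

Lemma mu_nil a p : support p = [::] -> mu_diag a p = Z0.
Proof. by rewrite /mu_diag => ->. Qed.

Lemma mu_ext a p q : (forall m, pcoef p m = pcoef q m) -> mu_diag a p = mu_diag a q.
Proof.
move=> hpq.
have hs : forall m, (m \in support p) = (m \in support q) by move=> m; rewrite !mem_support hpq.
have [sp|sp] := eqVneq (support p) [::].
  have sq : support q = [::].
    case E: (support q) => [//|x s]; have := hs x; rewrite sp E inE eqxx //.
  by rewrite !mu_nil.
have sq : support q != [::].
  apply/eqP => E; case E': (support p) sp => [//|x s] _; have := hs x; rewrite E E' inE eqxx //.
have [m1 m1p e1] := mu_attained a sp.
have [m2 m2q e2] := mu_attained a sq.
have := mu_le (a:=a) m1p; have := mu_le (a:=a) m2q.
rewrite -hs in m2q; rewrite hs in m1p.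
have := mu_le (a:=a) m2q; have := mu_le (a:=a) m1p; lia.
Qed.
End MuS.

Lemma rdot_sumr n (I : Type) (r : seq I) (P : pred I) (G : I -> 'rV[rat]_n) z :
  rdot z (\sum_(i <- r | P i) G i) = \sum_(i <- r | P i) rdot z (G i).
Proof. exact: (dot_sumr (@rdotDl n) (@rdotZl n) (@rdotC n)). Qed.
Lemma rdotZr n t (x z : 'rV[rat]_n) : rdot z (t *: x) = t * rdot z x.
Proof. exact: (dotZr (@rdotZl n) (@rdotC n)). Qed.
Lemma rcs n (a h : 'rV[rat]_n) : rdot a h ^+ 2 <= rdot a a * rdot h h.
Proof. exact: (cauchy_schwarz (@rdotDl n) (@rdotZl n) (@rdotC n) (@rdot_ge0 n)). Qed.

Definition arow n (a : zvec n) : 'rV[rat]_n := \row_j zq (a j).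
Definition sqz n (a : zvec n) : Z := \big[Z.add/Z0]_(j < n) Z.mul (a j) (a j).

Lemma zq_sqz n (a : zvec n) : zq (sqz a) = rdot (arow a) (arow a).
Proof. by rewrite /sqz zq_sum; apply: eq_bigr => j _; rewrite zqM !mxE. Qed.

Lemma zq_wt n (a : zvec n) (m : mono n) :
  zq (wt a m) = \sum_j zq (a j) * (m j)%:R.
Proof. by rewrite /wt zq_sum; apply: eq_bigr => j _; rewrite zqM zq_nat. Qed.

Definition cpt n (m : mono n) : 'rV[rat]_n := \row_j ((m j)%:R - (mdeg m)%:R / n%:R).

Lemma dot_cpt n (a : zvec n) (m : mono n) : zsum a = Z0 ->
  rdot (arow a) (cpt m) = zq (wt a m).
Proof.
move=> hz; rewrite zq_wt /rdot.
rewrite (eq_bigr (fun j => zq (a j) * (m j)%:R - zq (a j) * ((mdeg m)%:R / n%:R))); last first.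
  by move=> j _; rewrite !mxE mulrBr.
rewrite sumrB -mulr_suml -zq_sum.
by rewrite (_ : \big[Z.add/Z0]_(i < n) a i = zsum a) // hz zq0 mul0r subr0.
Qed.

Lemma sum_cpt n (m : mono n) : (0 < n)%N -> \sum_j cpt m 0 j = 0.
Proof.
move=> n0; rewrite /cpt (eq_bigr (fun j => (m j)%:R - (mdeg m)%:R / n%:R)); last first.
  by move=> j _; rewrite mxE.
rewrite sumrB sumr_const card_ord -natr_sum -/(mdeg m).
have hn : (n%:R : rat) != 0 by rewrite pnatr_eq0 -lt0n.
by rewrite -[_ *+ n]mulr_natr mulfVK // subrr.
Qed.

Lemma scale_int n (h : 'rV[rat]_n) :
  exists M : rat, exists b : zvec n, 0 < M /\ forall j, zq (b j) = M * h 0 j.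
Proof.
pose d j := denq (h 0 j).
exists ((\prod_j d j)%:~R), (fun j => Z_of_int (numq (h 0 j) * \prod_(i | i != j) d i)).
split.
  by rewrite ltr0z; apply: prodr_gt0 => j _; exact: denq_gt0.
move=> j; rewrite zq_int rmorphM /= numqE [in RHS](bigD1 j) //= rmorphM /=.
ring.
Qed.

Module RLm.
Import Lra.
Local Open Scope R_scope.
Lemma RL (x y A B : Z) : Z.lt 0 A -> Z.lt 0 B -> Z.lt 0 y ->
  (Z.lt 0 x -> Z.le (x * x * B) (y * y * A)) ->
  Rle (Rdiv (IZR x) (sqrt (IZR A))) (Rdiv (IZR y) (sqrt (IZR B))).
Proof.
move=> hA hB hy hxy.
have rA : Rlt 0 (IZR A) by apply: IZR_lt.
have rB : Rlt 0 (IZR B) by apply: IZR_lt.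
have ry : Rlt 0 (IZR y) by apply: IZR_lt.
have sA := sqrt_lt_R0 _ rA; have sB := sqrt_lt_R0 _ rB.
have eA := sqrt_sqrt _ (Rlt_le _ _ rA); have eB := sqrt_sqrt _ (Rlt_le _ _ rB).
set a := sqrt (IZR A) in sA eA *; set b := sqrt (IZR B) in sB eB *.
have iA : Rmult a (Rinv a) = R1 by apply: Rinv_r; apply: Rgt_not_eq.
have iB : Rmult b (Rinv b) = R1 by apply: Rinv_r; apply: Rgt_not_eq.
have ipA : Rlt 0 (Rinv a) by apply: Rinv_0_lt_compat.
have ipB : Rlt 0 (Rinv b) by apply: Rinv_0_lt_compat.
rewrite /Rdiv.
case: (Z.lt_ge_cases 0 x) => hx.
  have h := hxy hx.
  have rx : Rlt 0 (IZR x) by apply: IZR_lt.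
  have hR : Rle (IZR x * IZR x * IZR B) (IZR y * IZR y * IZR A).
    by rewrite -!mult_IZR; apply: IZR_le.
  have key : Rle (IZR x * b) (IZR y * a).
    rewrite -eA -eB in hR.
    apply: Rnot_lt_le => hc.
    have : Rlt (IZR y * a * (IZR y * a)) (IZR x * b * (IZR x * b)).
      apply Rmult_le_0_lt_compat; try Lra.lra.
        apply Rmult_le_pos; Lra.lra.
      apply Rmult_le_pos; Lra.lra.
    Lra.lra.
  have := Rmult_le_compat_r (Rinv a * Rinv b) _ _ (Rlt_le _ _ (Rmult_lt_0_compat _ _ ipA ipB)) key.
  have -> : Rmult (IZR x * b) (Rinv a * Rinv b) = Rmult (IZR x) (Rinv a).
    by rewrite (Rmult_comm (/a)) -Rmult_assoc (Rmult_assoc (IZR x)) iB Rmult_1_r.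
  have -> : Rmult (IZR y * a) (Rinv a * Rinv b) = Rmult (IZR y) (Rinv b).
    by rewrite -Rmult_assoc (Rmult_assoc (IZR y)) iA Rmult_1_r.
  by [].
have rx : Rle (IZR x) 0 by apply: IZR_le.
apply: Rle_trans (_ : Rle _ 0) _.
  by Lra.nra.
by apply: Rmult_le_pos; Lra.lra.
Qed.

Lemma Rpos_num (x A : Z) : Z.lt 0 A -> Rlt 0 (Rdiv (IZR x) (sqrt (IZR A))) -> Z.lt 0 x.
Proof.
move=> hA h; case: (Z.lt_ge_cases 0 x) => // hx; exfalso.
have rA : Rlt 0 (IZR A) by apply: IZR_lt.
have sA := sqrt_lt_R0 _ rA.
have ipA : Rlt 0 (Rinv (sqrt (IZR A))) by apply: Rinv_0_lt_compat.
have rx : Rle (IZR x) 0 by apply: IZR_le.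
move: h; rewrite /Rdiv; Lra.nra.
Qed.
End RLm.

Lemma zq_gt0 z : 0 < zq z -> Z.lt 0 z.
Proof.
move=> h; case: (Z.lt_ge_cases 0 z) => // hz; exfalso.
have : zq z <= zq Z0 by rewrite zq_le; apply/Z.leb_le.
by rewrite zq0 leNgt h.
Qed.

Lemma znorm_sqz n (a : zvec n) : znorm a = sqrt (IZR (sqz a)).
Proof.
rewrite /znorm /sqz; congr sqrt; symmetry.
rewrite (big_morph IZR plus_IZR (erefl (IZR Z0))).
by apply: eq_bigr => j _; rewrite mult_IZR.
Qed.

Lemma sqz_gt0 n (a : zvec n) : znontriv a -> Z.lt 0 (sqz a).
Proof.
case=> j hj; apply: zq_gt0; rewrite zq_sqz; apply: (@rdot_gt0 _ _ j).
rewrite mxE; apply/negP => /eqP e; apply: hj; apply: zq_inj; by rewrite e zq0.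
Qed.

Section ME.
Variables (k : fieldType) (n : nat) (p : fpoly k n).

Lemma max_exists : (exists a0, inGammaT a0 /\ Rlt 0 (DeltaQ p a0)) ->
  exists b, inGammaT b /\ forall a, inGammaT a -> Rle (DeltaQ p a) (DeltaQ p b).
Proof.
move=> [a0 [[z0 nt0] hpos]].
have n0 : (0 < n)%N by case: nt0 => i _; exact: (leq_ltn_trans (leq0n i) (ltn_ord i)).
have hmu0 : Z.lt 0 (mu_diag a0 p).
  by move: hpos; rewrite /DeltaQ znorm_sqz; apply: RLm.Rpos_num; exact: sqz_gt0.
have hS : support p != [::].
  by apply/eqP => e; move: hmu0; rewrite mu_nil.
pose S := support p.
have N0 : (0 < size S)%N by rewrite lt0n size_eq0.
pose Pt (i : 'I_(size S)) := cpt (nth (@mzero n) S i).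
have [h [[lam [lam0 [lam1 hh]]] hnear]] :=
  nearest (@rdotDl n) (@rdotZl n) (@rdotC n) (@rdot_ge0 n) Pt (Ordinal N0).
have ha_h : forall a, zsum a = Z0 -> zq (mu_diag a p) <= rdot (arow a) h.
  move=> a za; rewrite hh /comb rdot_sumr.
  rewrite -[zq _]mul1r -lam1 mulr_suml; apply: ler_sum => i _.
  rewrite rdotZr; apply: ler_wpM2l; first exact: lam0.
  rewrite /Pt dot_cpt // zq_le; apply/Z.leb_le; apply: mu_le; exact: mem_nth.
have hhpos : 0 < rdot h h.
  have h1 : 0 < rdot (arow a0) h.
    apply: lt_le_trans (ha_h a0 z0); rewrite -zq0 ltNge zq_le; apply/negP => /Z.leb_le; lia.
  have := rcs (arow a0) h; have := rdot_ge0 (arow a0); nra.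
have [M [b [M0 hb]]] := scale_int h.
have arowb : arow b = M *: h by apply/rowP => j; rewrite !mxE hb.
have sumh : \sum_j h 0 j = 0.
  rewrite hh /comb (eq_bigr (fun j => \sum_(i in setT) lam i * Pt i 0 j)); last first.
    by move=> j _; rewrite summxE; apply: eq_bigr => i _; rewrite mxE.
  rewrite exchange_big big1 // => i _; rewrite -mulr_sumr sum_cpt // mulr0 //.
have zb : zsum b = Z0.
  apply: zq_inj; rewrite zq0 /zsum zq_sum (eq_bigr (fun j => M * h 0 j)) //.
  by rewrite -mulr_sumr sumh mulr0.
have ntb : znontriv b.
  have [j hj] : exists j, h 0 j != 0.
    apply/existsP; apply: contraLR (lt0r_neq0 hhpos) => /existsPn hn.
    rewrite negbK /rdot big1 // => j _; by rewrite (eqP (negPn (hn j))) mulr0.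
  exists j => e; have := hb j; rewrite e zq0 => /esym/eqP.
  by rewrite mulf_eq0 (gt_eqF M0) (negbTE hj).
have hmub : M * rdot h h <= zq (mu_diag b p).
  have [m mS ->] := mu_attained b hS.
  have mi : (index m S < size S)%N by rewrite index_mem.
  have -> : m = nth (@mzero n) S (Ordinal mi) by rewrite /= nth_index.
  rewrite -dot_cpt // arowb rdotZl; exact: (ler_wpM2l (ltW M0) (hnear (Ordinal mi))).
have hsqb : zq (sqz b) = M * M * rdot h h.
  by rewrite zq_sqz arowb rdotZl rdotZr mulrA.
have Mh : 0 < M * rdot h h by apply: mulr_gt0.
exists b; split; first by [].
move=> a [za nta].
rewrite /DeltaQ !znorm_sqz; apply: RLm.RL.
- exact: sqz_gt0.
- exact: sqz_gt0.
- by apply: zq_gt0; apply: lt_le_trans hmub.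
move=> hma; apply/Z.leb_le; rewrite -zq_le !zqM hsqb zq_sqz.
have h1 := ha_h a za.
have h2 := rcs (arow a) h.
have hma' : 0 < zq (mu_diag a p).
  rewrite -zq0 ltNge zq_le; apply/negP => /Z.leb_le; lia.
have hA := rdot_ge0 (arow a).
set ma := zq (mu_diag a p) in h1 hma' *; set mb := zq (mu_diag b p) in hmub *.
set A := rdot (arow a) (arow a) in h2 hA *; set d := rdot (arow a) h in h1 h2 *.
set hh' := rdot h h in hhpos hmub Mh h2 *.
have s1 : ma * ma <= A * hh'.
  apply: le_trans h2; rewrite expr2; apply: ler_pM => //; exact: ltW.
have s2 : ma * ma * (M * M * hh') <= A * hh' * (M * M * hh').
  by apply: ler_wpM2r => //; apply: mulr_ge0; [apply: mulr_ge0; exact: ltW|exact: ltW].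
have s4 : (M * hh') * (M * hh') <= mb * mb by apply: ler_pM => //; exact: ltW.
have s5 : A * ((M * hh') * (M * hh')) <= A * (mb * mb) by apply: ler_wpM2l.
have e3 : A * hh' * (M * M * hh') = A * ((M * hh') * (M * hh')) by ring.
by apply: le_trans s2 _; rewrite e3; apply: le_trans s5 _; rewrite mulrC.
Qed.
End ME.

Section INV.
Variables (k : fieldType) (n : nat) (a : zvec n).
Local Notation mono := (Defs.mono n).
Local Notation fpoly := (Defs.fpoly k n).

Definition Inv (w : Z) (p : fpoly) :=
  all (fun t => (t.1 == 0) || Z.leb w (wt a t.2)) p.

Lemma inv_pcoef w p m : Inv w p -> pcoef p m != 0 -> Z.le w (wt a m).
Proof.
move=> /allP hp hm.
have [t tp /andP [/eqP tm t0]] : exists2 t, t \in p & (t.2 == m) && (t.1 != 0).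
  apply/hasP; move: hm; apply: contraLR; rewrite negbK => /hasPn hn.
  rewrite /pcoef big1_seq // => t /andP [tm tp].
  by have := hn t tp; rewrite tm /= negbK => /eqP.
by have := hp t tp; rewrite (negbTE t0) /= tm => /Z.leb_le.
Qed.

Lemma wt_madd (m1 m2 : mono) : wt a (madd m1 m2) = Z.add (wt a m1) (wt a m2).
Proof.
apply: zq_inj; rewrite zqD !zq_wt -big_split; apply: eq_bigr => j _.
by rewrite ffunE natrD mulrDr.
Qed.

Lemma wt_mzero : wt a (mzero n) = Z0.
Proof. by apply: zq_inj; rewrite zq_wt zq0 big1 // => j _; rewrite ffunE mulr0. Qed.

Lemma wt_munit i : wt a (munit i) = a i.
Proof.
apply: zq_inj; rewrite zq_wt (bigD1 i) //= ffunE eqxx mulr1 big1 ?addr0 // => j /negbTE ji.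
by rewrite ffunE ji mulr0.
Qed.

Lemma inv_pmul w1 w2 p q : Inv w1 p -> Inv w2 q -> Inv (Z.add w1 w2) (pmul p q).
Proof.
move=> /allP hp /allP hq; apply/allP => z /allpairsP [[t u] [/= tp uq ->]] /=.
have := hp t tp; have := hq u uq.
case/orP => [/eqP ->|hu]; first by rewrite mulr0 eqxx.
case/orP => [/eqP ->|ht]; first by rewrite mul0r eqxx.
apply/orP; right; rewrite wt_madd; apply/Z.leb_le.
move/Z.leb_le: hu => hu; move/Z.leb_le: ht => ht; exact: Z.add_le_mono ht hu.
Qed.

Lemma inv_pone : Inv Z0 (pone k n).
Proof. by rewrite /Inv /pone /= wt_mzero orbT. Qed.

Lemma inv_weaken w w' p : Z.le w' w -> Inv w p -> Inv w' p.
Proof.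
move=> h /allP hp; apply/allP => t tp; have := hp t tp.
case/orP => [->//|/Z.leb_le ht]; apply/orP; right; apply/Z.leb_le; lia.
Qed.

Lemma inv_pexp w p e : Inv w p -> Inv (Z.mul w (Z.of_nat e)) (pexp p e).
Proof.
move=> hp; elim: e => [|e IH]; first by rewrite Z.mul_0_r; exact: inv_pone.
rewrite /pexp /= -/(pexp p e).
apply: inv_weaken (inv_pmul hp IH); lia.
Qed.

Lemma inv_lin (l : 'M[k]_n) j :
  (forall i j : 'I_n, (i < j)%N -> l i j = 0) ->
  (forall i j : 'I_n, (i <= j)%N -> Z.le (a i) (a j)) ->
  Inv (a j) (lin_form l j).
Proof.
move=> hl ha; apply/allP => t /mapP [i _ ->] /=.
have [ij|ji] := ltnP i j; first by rewrite hl // eqxx.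
by apply/orP; right; rewrite wt_munit; apply/Z.leb_le; apply: ha.
Qed.

Lemma inv_act_mono (l : 'M[k]_n) m :
  (forall i j : 'I_n, (i < j)%N -> l i j = 0) ->
  (forall i j : 'I_n, (i <= j)%N -> Z.le (a i) (a j)) ->
  Inv (wt a m) (act_mono l m).
Proof.
move=> hl ha; rewrite /act_mono.
have -> : wt a m = \big[Z.add/Z0]_(j <- enum 'I_n) Z.mul (a j) (Z.of_nat (m j)).
  by rewrite -deprecated_filter_index_enum big_filter.
elim: (enum 'I_n) => [|j s IH]; first by rewrite big_nil; exact: inv_pone.
rewrite big_cons /=; apply: inv_pmul IH; apply: inv_pexp; exact: inv_lin.
Qed.
End INV.

End Cm.
Import Cm.

Module Pmm.
Import Defs.
Local Open Scope ring_scope.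

Module PM.
Import mpoly.

Section P.
Variables (k : fieldType) (n : nat).
Local Notation mono := (Defs.mono n).
Local Notation fpoly := (Defs.fpoly k n).

Definition mm (m : mono) : 'X_{1..n} := [multinom m i | i < n].
Definition unmm (m : 'X_{1..n}) : mono := [ffun i => m i].
Lemma mmK m : unmm (mm m) = m. Proof. by apply/ffunP => i; rewrite ffunE mnmE. Qed.
Lemma unmmK m : mm (unmm m) = m. Proof. by apply/mnmP => i; rewrite mnmE ffunE. Qed.
Lemma mm_eq m1 m2 : (mm m1 == mm m2) = (m1 == m2).
Proof.
apply/eqP/eqP => [e|-> //]; by rewrite -(mmK m1) e mmK.
Qed.

Definition toM (p : fpoly) : {mpoly k[n]} := \sum_(t <- p) t.1 *: 'X_[mm t.2].

Lemma pcoef_toM p m : pcoef p m = (toM p)@_(mm m).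
Proof.
rewrite /pcoef /toM raddf_sum /= big_mkcond /=; apply: eq_bigr => t _.
by rewrite mcoeffZ mcoeffX mm_eq; case: eqP => _; rewrite ?mulr1 ?mulr0.
Qed.

Lemma toM_cat p q : toM (p ++ q) = toM p + toM q.
Proof. by rewrite /toM big_cat. Qed.

Lemma toM_pscale c p : toM (pscale c p) = c *: toM p.
Proof. by rewrite /toM /pscale big_map scaler_sumr; apply: eq_bigr => t _; rewrite scalerA. Qed.

Lemma toM_flatten (T : Type) (f : T -> fpoly) (s : seq T) :
  toM (flatten [seq f x | x <- s]) = \sum_(x <- s) toM (f x).
Proof.
elim: s => [|x s IH]; first by rewrite big_nil /toM big_nil.
by rewrite /= toM_cat IH big_cons.
Qed.

Lemma mm_add m1 m2 : mm (madd m1 m2) = (mm m1 + mm m2)%MM.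
Proof. by apply/mnmP => i; rewrite mnmDE !mnmE ffunE. Qed.

Lemma toM_pmul p q : toM (pmul p q) = toM p * toM q.
Proof.
rewrite /toM /pmul big_allpairs_dep /= mulr_suml; apply: eq_bigr => t _.
rewrite mulr_sumr; apply: eq_bigr => u _.
by rewrite mm_add mpolyXD -scalerAl -scalerAr scalerA.
Qed.

Lemma toM_pone : toM (pone k n) = 1.
Proof.
rewrite /toM /pone big_cons big_nil addr0 scale1r.
rewrite (_ : mm (mzero n) = 0%MM) ?mpolyX0 //.
by apply/mnmP => i; rewrite mnmE mnm0E ffunE.
Qed.

Lemma toM_pexp p e : toM (pexp p e) = toM p ^+ e.
Proof. elim: e => [|e IH]; first by rewrite expr0 toM_pone. by rewrite exprS /= toM_pmul IH. Qed.

Definition L (g : 'M[k]_n) (j : 'I_n) : {mpoly k[n]} := \sum_i g i j *: 'X_i.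
Definition Lt (g : 'M[k]_n) : n.-tuple {mpoly k[n]} := [tuple L g j | j < n].

Lemma toM_lin g j : toM (lin_form g j) = L g j.
Proof.
rewrite /toM /lin_form big_map big_enum /L; apply: eq_bigr => i _ /=.
by rewrite (_ : mm (munit i) = U_(i)%MM) //; apply/mnmP => l; rewrite mnmE mnm1E ffunE eq_sym.
Qed.

Lemma toM_act_mono g m : toM (act_mono g m) = 'X_[mm m] \mPo Lt g.
Proof.
rewrite comp_mpolyX /act_mono -big_enum /=.
elim: (enum 'I_n) => [|j s IH]; first by rewrite big_nil toM_pone.
by rewrite big_cons /= toM_pmul IH toM_pexp toM_lin tnth_mktuple mnmE.
Qed.

Lemma toM_act g p : toM (act g p) = toM p \mPo Lt g.
Proof.
rewrite /act toM_flatten [in RHS]/toM raddf_sum; apply: eq_bigr => t _ /=.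
by rewrite toM_pscale comp_mpolyZ -toM_act_mono.
Qed.

Lemma comp_L (A B : 'M[k]_n) j : L B j \mPo Lt A = L (A *m B) j.
Proof.
rewrite /L raddf_sum /=.
rewrite (eq_bigr (fun i => B i j *: \sum_l A l i *: 'X_l)); last first.
  by move=> i _; rewrite comp_mpolyZ comp_mpolyXU -tnth_nth tnth_mktuple.
rewrite (eq_bigr (fun i => \sum_l (B i j * A l i) *: 'X_l)); last first.
  by move=> i _; rewrite scaler_sumr; apply: eq_bigr => l _; rewrite scalerA.
rewrite exchange_big /=; apply: eq_bigr => l _.
by rewrite -scaler_suml mxE; congr (_ *: _); apply: eq_bigr => i _; rewrite mulrC.
Qed.

Lemma comp_comp (P : {mpoly k[n]}) (A B : 'M[k]_n) :
  (P \mPo Lt B) \mPo Lt A = P \mPo Lt (A *m B).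
Proof.
rewrite [P \mPo Lt B]comp_mpolyEX [P \mPo Lt (A *m B)]comp_mpolyEX.
rewrite (big_morph (comp_mpoly (Lt A)) (comp_mpolyD (Lt A)) (comp_mpoly0 (Lt A))).
apply: eq_bigr => m _; rewrite comp_mpolyZ; congr (_ *: _).
rewrite !comp_mpolyX rmorph_prod /=; apply: eq_bigr => i _.
by rewrite rmorphXn /= !tnth_mktuple comp_L.
Qed.

Lemma pcoef_act_comp (A B : 'M[k]_n) p m :
  pcoef (act A (act B p)) m = pcoef (act (A *m B) p) m.
Proof. by rewrite !pcoef_toM !toM_act comp_comp. Qed.

Lemma pcoef_act1 (p : fpoly) (m : mono) : pcoef (act 1%:M p) m = pcoef p m.
Proof.
rewrite !pcoef_toM toM_act (_ : Lt 1%:M = [tuple 'X_i | i < n]) ?comp_mpoly_id //.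
apply: eq_from_tnth => j; rewrite !tnth_mktuple /L (bigD1 j) //= mxE eqxx scale1r.
by rewrite big1 ?addr0 // => i /negbTE ij; rewrite mxE ij scale0r.
Qed.

Lemma act_lower (l : 'M[k]_n) (a : zvec n) (q : fpoly) (m' : mono) :
  (forall i j : 'I_n, (i < j)%N -> l i j = 0) ->
  (forall i j : 'I_n, (i <= j)%N -> Z.le (a i) (a j)) ->
  pcoef (act l q) m' != 0 -> exists m, pcoef q m != 0 /\ Z.le (wt a m) (wt a m').
Proof.
move=> hl ha; rewrite pcoef_toM toM_act comp_mpolyEX raddf_sum /= => h.
have [x xs hx] : exists2 x, x \in msupp (toM q) &
    (((toM q)@_x *: ('X_[x] \mPo Lt l))@_(mm m') != 0).
  apply/hasP; move: h; apply: contraLR; rewrite negbK => /hasPn hn.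
  by rewrite big1_seq // => x /andP [_ xs]; apply/eqP; move: (hn x xs); rewrite negbK.
rewrite mcoeffZ mulf_eq0 negb_or in hx; case/andP: hx => hx1 hx2.
exists (unmm x); split; first by rewrite pcoef_toM unmmK.
apply: (inv_pcoef (inv_act_mono (unmm x) hl ha)).
by rewrite pcoef_toM toM_act_mono unmmK.
Qed.

Lemma pcoef_act_ext (p p' : fpoly) (g : 'M[k]_n) :
  (forall m, pcoef p m = pcoef p' m) -> forall m, pcoef (act g p) m = pcoef (act g p') m.
Proof.
move=> h m; rewrite !pcoef_toM !toM_act.
have -> : toM p = toM p' by apply/mpolyP => x; rewrite -(unmmK x) -!pcoef_toM.
by [].
Qed.

End P.
End PM.

End Pmm.
Import Pmm.

Module Mm.
Import Defs.

Section MainAux.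
Variables (k : fieldType) (n : nat).

Lemma DeltaAbs_spec (p : fpoly k n) :
  (exists a0, inGammaT a0 /\ Rlt 0 (DeltaQ p a0)) ->
  (forall a, inGammaT a -> Rle (DeltaQ p a) (DeltaAbs p)) /\
  (exists b, inGammaT b /\ DeltaQ p b = DeltaAbs p).
Proof.
move=> h; have [b [gb hb]] := max_exists h.
have := epsilon_spec (inhabits R0)
  (fun M => (exists a, inGammaT a /\ DeltaQ p a = M) /\
            forall a, inGammaT a -> Rle (DeltaQ p a) M).
rewrite -/(DeltaAbs p) => H.
have [[b' [gb' eb']] hle] := H (ex_intro _ (DeltaQ p b) (conj (ex_intro _ b (conj gb erefl)) hb)).
by split=> //; exists b'.
Qed.

Lemma DeltaQ_ext (p q : fpoly k n) a :
  (forall m, pcoef p m = pcoef q m) -> DeltaQ p a = DeltaQ q a.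
Proof. by move=> h; rewrite /DeltaQ (mu_ext a h). Qed.

Lemma znorm_pos (a : zvec n) : znontriv a -> Rlt 0 (znorm a).
Proof.
move=> h; rewrite znorm_sqz; apply: sqrt_lt_R0; apply: IZR_lt; exact: sqz_gt0.
Qed.

Lemma DeltaQ_mono (p q : fpoly k n) a : znontriv a ->
  Z.le (mu_diag a p) (mu_diag a q) -> Rle (DeltaQ p a) (DeltaQ q a).
Proof.
move=> h hle; rewrite /DeltaQ /Rdiv; apply: Rmult_le_compat_r.
  by apply: Rlt_le; apply: Rinv_0_lt_compat; exact: znorm_pos.
exact: IZR_le.
Qed.

Lemma DeltaQ_pos_mu (p : fpoly k n) a : znontriv a -> Rlt 0 (DeltaQ p a) -> Z.lt 0 (mu_diag a p).
Proof. by move=> h; rewrite /DeltaQ znorm_sqz; apply: RLm.Rpos_num; exact: sqz_gt0. Qed.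

End MainAux.



End Mm.
Import Mm.

Local Open Scope ring_scope.

Theorem lemma3p2 (k : closedFieldType) (r d : nat) (hr : (1 <= r)%N) (hd : (1 <= d)%N)
  (f : fpoly k r.+1) (hf_hom : homog d f) (hf0 : pnonzero f) (hus : unstable f)
  (g : 'M[k]_r.+1) (hg : g \in unitmx)
  (hmax : forall h : 'M[k]_r.+1, h \in unitmx ->
            Rle (DeltaAbs (act h f)) (DeltaAbs (act g f)))
  (a : zvec r.+1) (ha : is_lambda (act g f) a)
  (hsorted : forall i j : 'I_r.+1, (i <= j)%N -> Z.le (a i) (a j)) :
  (forall l : 'M[k]_r.+1, \det l = 1 ->
     (forall i j : 'I_r.+1, (i < j)%N -> l i j = 0) ->
     is_lambda (act (l *m g) f) a)
  /\ inLambda (act g f) 1%:M a.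
Proof.
case: ha => [hpos [[za nta] [inda hDa]]].
have hDpos : Rlt 0 (DeltaQ (act g f) a) by rewrite hDa.
have hmu : Z.lt 0 (mu_diag a (act g f)) by apply: DeltaQ_pos_mu hDpos.
split.
  move=> l hdet hl.
  have lu : l \in unitmx by rewrite unitmxE hdet unitr1.
  set q' := act (l *m g) f.
  have hsupp : Defs.support q' != [::].
    apply/eqP => e.
    have z : forall m, pcoef q' m = pcoef ([::] : fpoly k r.+1) m.
      move=> m; rewrite {2}/pcoef big_nil; apply/eqP; rewrite -[_ == _]negbK -mem_support e //.
    have hq : forall m, pcoef (act g f) m = 0.
      move=> m; have -> : g = invmx l *m (l *m g) by rewrite mulmxA mulVmx // mul1mx.
      by rewrite -PM.pcoef_act_comp (PM.pcoef_act_ext _ z) /pcoef big_nil.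
    have : Defs.support (act g f) = [::].
      case E: (Defs.support (act g f)) => [//|x s].
      by have := mem_support (act g f) x; rewrite E inE eqxx hq eqxx.
    by move/(mu_nil a); lia.
  have [m' m'S hm'] := mu_attained a hsupp.
  have hc : pcoef (act l (act g f)) m' != 0 by rewrite PM.pcoef_act_comp -mem_support.
  have [m [hm hw]] := PM.act_lower hl hsorted hc.
  have hmono : Z.le (mu_diag a (act g f)) (mu_diag a q').
    rewrite hm'; apply: (Z.le_trans _ (wt a m)); last exact: hw.
    by apply: mu_le; rewrite mem_support.
  have hD1 := DeltaQ_mono nta hmono.
  have hpos' : Rlt 0 (DeltaQ q' a) := Rlt_le_trans _ _ _ hDpos hD1.
  have [hub _] := DeltaAbs_spec (ex_intro _ a (conj (conj za nta) hpos')).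
  have h1 := hub a (conj za nta).
  have h2 : Rle (DeltaAbs q') (DeltaAbs (act g f)).
    by apply: hmax; rewrite unitmx_mul lu hg.
  split; first exact: Rlt_le_trans hpos' h1.
  split; first by split.
  split; first by [].
  apply: Rle_antisym h1 _.
  apply: Rle_trans h2 _; rewrite -hDa; exact: hD1.
split; first by split; [exact: unitmx1|exact: za].
split; first by [].
move=> h' a' [hu' za'] nta'.
have e1 : Defs.ratio (act g f) 1%:M a = DeltaQ (act g f) a.
  by rewrite /Defs.ratio /mu_gen invmx1 /DeltaQ (mu_ext a (PM.pcoef_act1 (act g f))).
have e2 : Defs.ratio (act g f) h' a' = DeltaQ (act (invmx h' *m g) f) a'.
  by rewrite /Defs.ratio /mu_gen /DeltaQ (mu_ext a' (PM.pcoef_act_comp (invmx h') g f)).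
rewrite e1 e2.
case: (Rle_or_lt (DeltaQ (act (invmx h' *m g) f) a') 0) => h0.
  exact: Rle_trans h0 (Rlt_le _ _ hDpos).
have [hub _] := DeltaAbs_spec (ex_intro _ a' (conj (conj za' nta') h0)).
apply: Rle_trans (hub a' (conj za' nta')) _; rewrite hDa.
by apply: hmax; rewrite unitmx_mul unitmx_inv hu' hg.
Qed.
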